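(* Suppose $F$ is a $\mu$-PL function for some $\mu>0$. Let $b\le n$ and $\eta=\rho/L$ where $0<\rho\le 1/5$ satisfies $$\frac{16n^2\rho^2}{b^3}+\rho\le 1,$$ and let $T=\lceil 6L/(\mu\rho)\rceil$. Then for every integer $K\ge1$, the output $x^K$ of PL-SAGA$(x^0,K,T,b,\eta)$ satisfies $$\mathbb E\big[F(x^K)-F(x^* )\big]\le \frac{F(x^0)-F(x^* )}{2^K},$$ where $x^*$ is an optimal solution of $\min_x F(x)$.
   Context: Setting: Let $n,d\ge 1$ be integers and $[n]=\{1,\dots,n\}$. Let $f_1,\dots,f_n:\mathbb R^d\to\mathbb R$ be differentiable (possibly nonconvex) functions, each $L$-smooth for some $L>0$, i.e. $\|\nabla f_i(x)-\nabla f_i(y)\|\le L\|x-y\|$ for all $x,y\in\mathbb R^d$ and $i\in[n]$. Let $f=\frac1n\sum_{i=1}^n f_i$. Let $h:\mathbb R^d\to\mathbb R\cup\{+\infty\}$ be proper, lower semicontinuous and convex, with closed domain. Let $F=f+h$, and let $x^*$ be a global minimizer of $F$ on $\mathbb R^d$ (assumed to exist). For $\eta>0$, $\mathrm{prox}_{\eta h}(x):=\arg\min_{y\in\mathbb R^d}\big(h(y)+\frac1{2\eta}\|y-x\|^2\big)$. $\mu$-PL functions: for $x\in\mathbb R^d$ and $\alpha>0$ define $D_h(x,\alpha):=-2\alpha\min_{y\in\mathbb R^d}\big[\langle\nabla f(x),y-x\rangle+\frac{\alpha}{2}\|y-x\|^2+h(y)-h(x)\big]$. $F$ is called $\mu$-PL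 ($\mu>0$) if $\mu\,(F(x)-F(x^* ))\le \frac12 D_h(x,\mu)$ for all $x\in\mathrm{dom}(h)$. Algorithm ProxSAGA$(x^0,T,b,\eta)$: Given $x^0\in\mathbb R^d$, positive integers $T,b$ and $\eta>0$, set $\alpha^0_i=x^0$ for all $i\in[n]$. For $t=0,1,\dots$ let $g^t=\frac1n\sum_{i=1}^n\nabla f_i(\alpha^t_i)$. For $t=0,\dots,T-1$: draw two multisets $I_t,J_t$, each consisting of $b$ indices drawn independently and uniformly at random from $[n]$ (with replacement; $I_t$, $J_t$ independent of each other and of all previous draws); set $v^t=\frac1b\sum_{i\in I_t}\big(\nabla f_i(x^t)-\nabla f_i(\alpha^t_i)\big)+g^t$ and $x^{t+1}=\mathrm{prox}_{\eta h}(x^t-\eta v^t)$; set $\alpha^{t+1}_j=x^t$ for $j\in J_t$ and $\alpha^{t+1}_j=\alpha^t_j$ for $j\notin J_t$. The output $x_a$ is chosen uniformly at random from $\{x^0,\dots,x^{T-1}\}$. Algorithm PL-SAGA$(x^0,K,T,b,\eta)$: for $k=1,\dots,K$, let $x^k$ be the output $x_a$ of ProxSAGA$(x^{k-1},T,b,\eta)$ (run with fresh independent randomness); output $x^K$. Expectations are over all randomness. *)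

(* Defs.v *)
From Stdlib Require Import Reals.
From HB Require Import structures.
From mathcomp Require Import all_boot.

Set Implicit Arguments.
Unset Strict Implicit.
Unset Printing Implicit Defensive.

Local Open Scope R_scope.

Definition vec (d : nat) := 'I_d -> R.

Definition vadd d (u v : vec d) : vec d := fun i => u i + v i.
Definition vsub d (u v : vec d) : vec d := fun i => u i - v i.
Definition vscale d (a : R) (u : vec d) : vec d := fun i => a * u i.
Definition inner d (u v : vec d) : R := \big[Rplus/0]_(i < d) (u i * v i).
Definition norm d (u : vec d) : R := sqrt (inner u u).

Definition is_gradient d (f : vec d -> R) (g : vec d -> vec d) : Prop :=
  forall x eps, 0 < eps -> exists delta, 0 < delta /\
    forall y, norm (vsub y x) < delta ->
      Rabs (f y - f x - inner (g x) (vsub y x)) <= eps * norm (vsub y x).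

Definition lipschitz_grad d (L : R) (g : vec d -> vec d) : Prop :=
  forall x y, norm (vsub (g x) (g y)) <= L * norm (vsub x y).

(* h : R^d -> R u {+oo} is represented by its domain [dom] and its (finite)
   values [h] on the domain; h = +oo outside [dom]. *)
Definition proper_lsc_convex_closed_dom d (dom : vec d -> Prop) (h : vec d -> R) : Prop :=
  (exists x, dom x) /\
  (forall x y t, dom x -> dom y -> 0 <= t <= 1 ->
     dom (vadd (vscale t x) (vscale (1 - t) y)) /\
     h (vadd (vscale t x) (vscale (1 - t) y)) <= t * h x + (1 - t) * h y) /\
  (forall x, (forall eps, 0 < eps -> exists y, dom y /\ norm (vsub y x) < eps) -> dom x) /\
  (* lower semicontinuous (at points outside dom this follows from closedness) *)
  (forall x, dom x -> forall eps, 0 < eps -> exists delta, 0 < delta /\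
     forall y, dom y -> norm (vsub y x) < delta -> h x - eps < h y).

Definition is_prox d (dom : vec d -> Prop) (h : vec d -> R) (eta : R)
  (p : vec d -> vec d) : Prop :=
  forall x, dom (p x) /\
    forall y, dom y ->
      h (p x) + / (2 * eta) * (norm (vsub (p x) x))^2
        <= h y + / (2 * eta) * (norm (vsub y x))^2.

Definition is_min_value d (dom : vec d -> Prop) (Q : vec d -> R) (m : R) : Prop :=
  (exists y, dom y /\ Q y = m) /\ forall y, dom y -> m <= Q y.

Definition favg n d (fs : 'I_n -> vec d -> R) (x : vec d) : R :=
  / INR n * \big[Rplus/0]_(i < n) fs i x.
Definition gavg n d (gs : 'I_n -> vec d -> vec d) (x : vec d) : vec d :=
  fun k => / INR n * \big[Rplus/0]_(i < n) gs i x k.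

Definition is_Dh n d (gs : 'I_n -> vec d -> vec d) (dom : vec d -> Prop)
  (h : vec d -> R) (x : vec d) (alpha D : R) : Prop :=
  exists m, is_min_value dom
    (fun y => inner (gavg gs x) (vsub y x) + alpha / 2 * (norm (vsub y x))^2 + h y - h x) m
    /\ D = -2 * alpha * m.

Definition is_PL n d (fs : 'I_n -> vec d -> R) (gs : 'I_n -> vec d -> vec d)
  (dom : vec d -> Prop) (h : vec d -> R) (Fstar mu : R) : Prop :=
  forall x, dom x -> forall D, is_Dh gs dom h x mu D ->
    mu * (favg fs x + h x - Fstar) <= / 2 * D.

(* randomness of one inner step: the multisets I_t and J_t *)
Definition step_rand n b := (b.-tuple 'I_n * b.-tuple 'I_n)%type.
(* randomness of one ProxSAGA run: T steps and the output index a *)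
Definition epoch_rand n b T := (T.-tuple (step_rand n b) * 'I_T)%type.

(* state: (x^t, (alpha^t_i)_i, [x^0; ...; x^{t-1}]) *)
Definition saga_state n d := (vec d * ('I_n -> vec d) * seq (vec d))%type.

Definition saga_step n d b (gs : 'I_n -> vec d -> vec d) (eta : R)
  (prox : vec d -> vec d) (st : saga_state n d) (w : step_rand n b)
  : saga_state n d :=
  let: (x, al, hist) := st in
  let: (Is, Js) := w in
  let g : vec d := fun k => / INR n * \big[Rplus/0]_(i < n) gs i (al i) k in
  let v : vec d := fun k =>
    / INR b * \big[Rplus/0]_(i <- tval Is) (gs i x k - gs i (al i) k) + g k in
  let x' := prox (vsub x (vscale eta v)) in
  let al' := fun j => if j \in tval Js then x else al j in
  (x', al', rcons hist x).

Definition prox_saga n d b T (gs : 'I_n -> vec d -> vec d) (eta : R)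
  (prox : vec d -> vec d) (x0 : vec d) (w : epoch_rand n b T) : vec d :=
  let: (steps, a) := w in
  let: (_, _, hist) :=
    foldl (saga_step gs eta prox) (x0, (fun _ => x0), [::]) (tval steps) in
  nth x0 hist a.

Definition pl_saga n d b T K (gs : 'I_n -> vec d -> vec d) (eta : R)
  (prox : vec d -> vec d) (x0 : vec d) (w : K.-tuple (epoch_rand n b T)) : vec d :=
  foldl (prox_saga gs eta prox) x0 (tval w).

Definition expect (Omega : finType) (X : Omega -> R) : R :=
  / INR #|{: Omega}| * \big[Rplus/0]_(w : Omega) X w.

Definition ceilR (x : R) : Z := (- Int_part (- x))%Z.

(* Main.v *)
Require Import Defs.
From Stdlib Require Import Reals.
From HB Require Import structures.
From mathcomp Require Import all_boot.
From Stdlib Require Import Lra Lia FunctionalExtensionality IndefiniteDescription.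
Local Open Scope R_scope.

Set Implicit Arguments.
Unset Strict Implicit.
Unset Printing Implicit Defensive.

Ltac vext := apply: functional_extensionality => kk; rewrite /vadd /vsub /vscale; ring.

Lemma RplusA : associative Rplus. Proof. move=> *; ring. Qed.
Lemma RmultA : associative Rmult. Proof. move=> *; ring. Qed.
HB.instance Definition _ := Monoid.isComLaw.Build R 0 Rplus RplusA Rplus_comm Rplus_0_l.
HB.instance Definition _ := Monoid.isComLaw.Build R 1 Rmult RmultA Rmult_comm Rmult_1_l.
HB.instance Definition _ := Monoid.isMulLaw.Build R 0 Rmult Rmult_0_l Rmult_0_r.
HB.instance Definition _ := Monoid.isAddLaw.Build R Rmult Rplus Rmult_plus_distr_r Rmult_plus_distr_l.

Lemma sumD (I : Type) (r : seq I) (P : pred I) (F G : I -> R) :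
  \big[Rplus/0]_(i <- r | P i) (F i + G i) =
  \big[Rplus/0]_(i <- r | P i) F i + \big[Rplus/0]_(i <- r | P i) G i.
Proof. by rewrite big_split. Qed.

Lemma sumZ (I : Type) (r : seq I) (P : pred I) (a : R) (F : I -> R) :
  a * \big[Rplus/0]_(i <- r | P i) F i = \big[Rplus/0]_(i <- r | P i) (a * F i).
Proof. by rewrite big_distrr. Qed.

Lemma sum_le (I : Type) (r : seq I) (P : pred I) (F G : I -> R) :
  (forall i, P i -> F i <= G i) ->
  \big[Rplus/0]_(i <- r | P i) F i <= \big[Rplus/0]_(i <- r | P i) G i.
Proof. move=> H; elim/big_rec2: _ => //=; first lra. move=> i a b Pi Hab; have := H i Pi; lra. Qed.

Lemma sum_ge0 (I : Type) (r : seq I) (P : pred I) (F : I -> R) :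
  (forall i, P i -> 0 <= F i) -> 0 <= \big[Rplus/0]_(i <- r | P i) F i.
Proof. move=> H; elim/big_rec: _ => //=; first lra. move=> i a Pi Ha; have := H i Pi; lra. Qed.

Lemma sum_const (I : Type) (r : seq I) (c : R) :
  \big[Rplus/0]_(i <- r) c = INR (size r) * c.
Proof. elim: r => [|x r IH]; first by rewrite big_nil /=; lra.
rewrite big_cons IH. have -> : size (x :: r) = S (size r) by []. rewrite S_INR; lra. Qed.

Lemma sum_card (I : finType) (c : R) :
  \big[Rplus/0]_(i : I) c = INR #|{: I}| * c.
Proof. by rewrite -big_enum sum_const cardE. Qed.

Lemma sum_opp (I : Type) (r : seq I) (P : pred I) (F : I -> R) :
  \big[Rplus/0]_(i <- r | P i) (- F i) = - \big[Rplus/0]_(i <- r | P i) F i.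
Proof. elim/big_rec2: _ => //=; first lra. move=> i a b _ ->; lra. Qed.

Lemma sumB (I : Type) (r : seq I) (P : pred I) (F G : I -> R) :
  \big[Rplus/0]_(i <- r | P i) (F i - G i) =
  \big[Rplus/0]_(i <- r | P i) F i - \big[Rplus/0]_(i <- r | P i) G i.
Proof. by rewrite sumD sum_opp. Qed.

Lemma card_pos (T : finType) (t : T) : (0 < INR #|{: T}|).
Proof. apply: lt_0_INR; apply/ltP; apply/card_gt0P; by exists t. Qed.

Lemma expect_le (T : finType) (X Y : T -> R) :
  (forall w, X w <= Y w) -> expect X <= expect Y.
Proof.
move=> H; rewrite /expect; apply: Rmult_le_compat_l.
  have := pos_INR #|{: T}|; case=> h.
    by apply/Rlt_le/Rinv_0_lt_compat.
  rewrite -h Rinv_0; lra.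
by apply: sum_le.
Qed.

Lemma expectD (T : finType) (X Y : T -> R) :
  expect (fun w => X w + Y w) = expect X + expect Y.
Proof. rewrite /expect sumD; lra. Qed.

Lemma expectZ (T : finType) (a : R) (X : T -> R) :
  expect (fun w => a * X w) = a * expect X.
Proof. rewrite /expect -sumZ; lra. Qed.

Lemma expect_const (T : finType) (t : T) (c : R) : expect (fun _ : T => c) = c.
Proof. rewrite /expect sum_card. have := card_pos t. move=> h. field. lra. Qed.

Lemma expect_pair (A B : finType) (X : A * B -> R) :
  expect X = expect (fun a => expect (fun b => X (a, b))).
Proof.
rewrite /expect card_prod mult_INR.
have -> : \big[Rplus/0]_(p : A * B) X p =
   \big[Rplus/0]_(a : A) \big[Rplus/0]_(b : B) X (a, b).
  by rewrite pair_bigA; apply: eq_bigr => -[].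
rewrite -big_distrr /= Rinv_mult; lra.
Qed.

Definition tup_split (T : Type) k (p : T * k.-tuple T) : k.+1.-tuple T :=
  [tuple of p.1 :: tval p.2].

Lemma sum_tuple (T : finType) k (F : k.+1.-tuple T -> R) :
  \big[Rplus/0]_(t : k.+1.-tuple T) F t =
  \big[Rplus/0]_(x : T) \big[Rplus/0]_(t : k.-tuple T) F [tuple of x :: tval t].
Proof.
rewrite pair_bigA /=.
rewrite (reindex (@tup_split T k)) /=.
  by apply: eq_bigr => -[x t].
exists (fun t : k.+1.-tuple T => (thead t, behead_tuple t)).
  move=> [x t] _ /=. congr pair. by apply: val_inj.
move=> t _; apply: val_inj => /=. case: t => -[|a s] //= _.
Qed.

Lemma expect_tuple (T : finType) k (X : k.+1.-tuple T -> R) :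
  expect X = expect (fun x : T => expect (fun t : k.-tuple T => X [tuple of x :: tval t])).
Proof.
rewrite /expect !card_tuple sum_tuple -big_distrr /=.
rewrite expnS mult_INR Rinv_mult; lra.
Qed.

Lemma expect_tuple0 (T : finType) (X : 0.-tuple T -> R) :
  expect X = X [tuple].
Proof.
rewrite /expect card_tuple expn0 /= (big_pred1 [tuple]).
  simpl; lra.
move=> t; apply/esym/eqP/val_inj; by case: t => -[].
Qed.

Section Vec.
Variable d : nat.
Implicit Types u v w x y z : vec d.

Definition nsq u := inner u u.


Lemma inner_sym u v : inner u v = inner v u.
Proof. rewrite /inner; apply: eq_bigr => i _; ring. Qed.

Lemma inner_addl u v w : inner (vadd u v) w = inner u w + inner v w.
Proof. rewrite /inner -sumD; apply: eq_bigr => i _; rewrite /vadd; ring. Qed.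
Lemma inner_addr u v w : inner w (vadd u v) = inner w u + inner w v.
Proof. by rewrite inner_sym inner_addl !(inner_sym w). Qed.
Lemma inner_subl u v w : inner (vsub u v) w = inner u w - inner v w.
Proof. rewrite /inner -sumB; apply: eq_bigr => i _; rewrite /vsub; ring. Qed.
Lemma inner_subr u v w : inner w (vsub u v) = inner w u - inner w v.
Proof. by rewrite inner_sym inner_subl !(inner_sym w). Qed.
Lemma inner_scalel a u w : inner (vscale a u) w = a * inner u w.
Proof. rewrite /inner sumZ; apply: eq_bigr => i _; rewrite /vscale; ring. Qed.
Lemma inner_scaler a u w : inner w (vscale a u) = a * inner w u.
Proof. by rewrite inner_sym inner_scalel (inner_sym w). Qed.

Lemma nsq_add u v : nsq (vadd u v) = nsq u + 2 * inner u v + nsq v.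
Proof. rewrite /nsq !inner_addl !inner_addr (inner_sym v u); ring. Qed.
Lemma nsq_sub u v : nsq (vsub u v) = nsq u - 2 * inner u v + nsq v.
Proof. rewrite /nsq !inner_subl !inner_subr (inner_sym v u); ring. Qed.
Lemma nsq_scale a u : nsq (vscale a u) = a ^ 2 * nsq u.
Proof. rewrite /nsq inner_scalel inner_scaler; ring. Qed.

Lemma nsq_ge0 u : 0 <= nsq u.
Proof. apply: sum_ge0 => i _; nra. Qed.

Lemma norm_ge0 u : 0 <= norm u.
Proof. exact: sqrt_pos. Qed.

Lemma norm_sq u : norm u ^ 2 = nsq u.
Proof. by rewrite /norm pow2_sqrt //; apply: nsq_ge0. Qed.

Lemma norm_nsq u : norm u = sqrt (nsq u).
Proof. by []. Qed.

Lemma young u v a : 0 < a -> inner u v <= a / 2 * nsq u + / (2 * a) * nsq v.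
Proof.
move=> ha.
have h := nsq_ge0 (vsub (vscale a u) v).
rewrite nsq_sub nsq_scale inner_scalel in h.
have : 0 <= / (2 * a) * (a ^ 2 * nsq u - 2 * (a * inner u v) + nsq v).
  apply: Rmult_le_pos => //; apply/Rlt_le/Rinv_0_lt_compat; lra.
have e : / (2 * a) * (a ^ 2 * nsq u - 2 * (a * inner u v) + nsq v) =
   a / 2 * nsq u + / (2 * a) * nsq v - inner u v by field; lra.
rewrite e; lra.
Qed.

Lemma coord_le u k : (u k) ^ 2 <= nsq u.
Proof.
rewrite /nsq /inner (bigD1 k) //=.
have : 0 <= \big[Rplus/0]_(i < d | i != k) (u i * u i) by apply: sum_ge0 => i _; nra.
rewrite Rmult_1_r -{1}(Rplus_0_r (u k * u k)) => h; apply: Rplus_le_compat_l; exact: h.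
Qed.

Lemma nsq0 u : nsq u = 0 -> u = (fun _ => 0).
Proof.
move=> h; apply: functional_extensionality => k.
have := coord_le u k; rewrite h => h1.
have : (u k) ^ 2 = 0 by have := pow2_ge_0 (u k); lra.
move=> h2; nra.
Qed.

Lemma nsq_sub_le u v : nsq (vadd u v) <= 2 * nsq u + 2 * nsq v.
Proof.
have := nsq_ge0 (vsub u v); rewrite nsq_sub nsq_add; lra.
Qed.

Lemma nsq_add_le u v b : 0 < b -> nsq (vadd u v) <= (1 + b) * nsq u + (1 + / b) * nsq v.
Proof.
move=> hb; rewrite nsq_add; have := young u v (a := b) hb.
have -> : / (2 * b) = / 2 * / b by rewrite Rinv_mult.
lra.
Qed.

Lemma nsq_zero : nsq (fun _ => 0) = 0.
Proof. rewrite /nsq /inner big1 // => i _; ring. Qed.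

End Vec.

Section Descent.
Variable d : nat.
Implicit Types u v w x y z : vec d.

Lemma norm_scale a u : norm (vscale a u) = Rabs a * norm u.
Proof.
rewrite !norm_nsq nsq_scale sqrt_mult_alt; last by apply: pow2_ge_0.
by rewrite -sqrt_Rsqr_abs /Rsqr /= Rmult_1_r.
Qed.

Lemma deriv_line (f : vec d -> R) g x u t :
  is_gradient f g ->
  derivable_pt_lim (fun s => f (vadd x (vscale s u))) t (inner (g (vadd x (vscale t u))) u).
Proof.
move=> Hg eps heps.
set p := vadd x (vscale t u).
have hN := norm_ge0 u.
have he' : 0 < eps / (2 * (norm u + 1)) by apply: Rdiv_lt_0_compat; lra.
case: (Hg p _ he') => del [hdel Hd].
have hdel' : 0 < del / (norm u + 1) by apply: Rdiv_lt_0_compat; lra.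
exists (mkposreal _ hdel') => h hh0 hh /=.
have ey : vsub (vadd x (vscale (t + h) u)) p = vscale h u.
  by apply: functional_extensionality => k; rewrite /p /vsub /vadd /vscale; ring.
have hn : norm (vscale h u) = Rabs h * norm u by apply: norm_scale.
have hlt : norm (vsub (vadd x (vscale (t + h) u)) p) < del.
  rewrite ey hn /=.
  have hh' : Rabs h * (norm u + 1) < del.
    simpl in hh. apply (Rmult_lt_compat_r (norm u + 1)) in hh; last lra.
    by rewrite /Rdiv Rmult_assoc Rinv_l in hh; lra.
  have := Rabs_pos h; nra.
have := Hd _ hlt. rewrite ey hn inner_scaler => Hb.
have hah : 0 < Rabs h by apply: Rabs_pos_lt.
have -> : (f (vadd x (vscale (t + h) u)) - f p) / h - inner (g p) u =
   (f (vadd x (vscale (t + h) u)) - f p - h * inner (g p) u) / h by field.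
rewrite /Rdiv Rabs_mult Rabs_inv.
apply: (Rle_lt_trans _ (eps / (2 * (norm u + 1)) * norm u)).
  apply (Rmult_le_reg_r (Rabs h)) => //.
  rewrite Rmult_assoc Rinv_l; [lra|lra].
apply: (Rle_lt_trans _ (eps / 2)); last lra.
rewrite /Rdiv Rinv_mult.
have : norm u * / (norm u + 1) <= 1.
  apply (Rmult_le_reg_r (norm u + 1)); first lra.
  rewrite Rmult_assoc Rinv_l; lra.
have : 0 <= / (norm u + 1) by apply/Rlt_le/Rinv_0_lt_compat; lra.
nra.
Qed.

Lemma deriv_poly a c t :
  derivable_pt_lim (fun s => s * a + c * (s * s)) t (a + c * (t + t)).
Proof.
have H1 := derivable_pt_lim_scal id a t 1 (derivable_pt_lim_id t).
have H2 := derivable_pt_lim_mult id id t 1 1 (derivable_pt_lim_id t) (derivable_pt_lim_id t).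
have H3 := derivable_pt_lim_scal _ c t _ H2.
have H4 := derivable_pt_lim_plus _ _ t _ _ H1 H3.
move: H4; rewrite /plus_fct /mult_real_fct /mult_fct /id.
have -> : a * 1 + c * (1 * t + t * 1) = a + c * (t + t) by ring.
move=> H eps he; case: (H eps he) => del Hd; exists del => h h0 hl.
have := Hd h h0 hl.
have -> : (t + h) * a + c * ((t + h) * (t + h)) - (t * a + c * (t * t))
   = a * (t + h) + c * ((t + h) * (t + h)) - (a * t + c * (t * t)) by ring.
done.
Qed.

Lemma descent (f : vec d -> R) g L x y :
  0 < L -> is_gradient f g -> lipschitz_grad L g ->
  f y <= f x + inner (g x) (vsub y x) + L / 2 * nsq (vsub y x).
Proof.
move=> hL Hg Hl.
set u := vsub y x. set a := inner (g x) u. set N := nsq u.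
pose phi := fun s => f (vadd x (vscale s u)) - (s * a + (L / 2 * N) * (s * s)).
have Hd : forall t, derivable_pt_lim phi t
   (inner (g (vadd x (vscale t u))) u - (a + (L / 2 * N) * (t + t))).
  move=> t; apply: derivable_pt_lim_minus; [exact: deriv_line | exact: deriv_poly].
pose pr := fun t => exist (fun l => derivable_pt_lim phi t l) _ (Hd t).
have [c [Hc Hc01]] := MVT_cor1 phi 0 1 pr Rlt_0_1.
rewrite /= in Hc.
have e1 : vadd x (vscale 1 u) = y.
  by apply: functional_extensionality => k; rewrite /vadd /vscale /u /vsub; ring.
have e0 : vadd x (vscale 0 u) = x.
  by apply: functional_extensionality => k; rewrite /vadd /vscale; ring.
rewrite /phi e1 e0 in Hc.
set w := vsub (g (vadd x (vscale c u))) (g x).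
have hc : 0 < c by lra.
have hw : nsq w <= L ^ 2 * (c ^ 2 * N).
  have := Hl (vadd x (vscale c u)) x.
  have -> : vsub (vadd x (vscale c u)) x = vscale c u.
    by apply: functional_extensionality => k; rewrite /vadd /vscale /vsub; ring.
  rewrite norm_scale Rabs_pos_eq; last lra.
  rewrite -/w => h.
  have h0 := norm_ge0 w.
  have h2 : norm w ^ 2 <= (L * (c * norm u)) ^ 2.
    apply: pow_incr; lra.
  rewrite norm_sq in h2. rewrite -/N.
  have : norm u ^ 2 = N by rewrite norm_sq.
  move=> hN; rewrite -hN; nra.
have hy := young w u (a := / (L * c)) ltac:(apply: Rinv_0_lt_compat; nra).
have e2 : / (2 * / (L * c)) = L * c / 2 by field; nra. rewrite e2 -/N in hy.
have hder : inner (g (vadd x (vscale c u))) u - (a + L / 2 * N * (c + c)) <= 0.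
  have -> : inner (g (vadd x (vscale c u))) u = inner w u + a
    by rewrite /w inner_subl /a; ring.
  have e : / (L * c) / 2 * nsq w <= L * c / 2 * N.
    have -> : / (L * c) / 2 * nsq w = nsq w / (2 * (L * c)) by field; lra.
    apply: (Rle_trans _ (L ^ 2 * (c ^ 2 * N) / (2 * (L * c)))).
      apply: Rmult_le_compat_r => //; apply/Rlt_le/Rinv_0_lt_compat; nra.
    right; field; lra.
  have hh : L / 2 * N * (c + c) = 2 * (L * c / 2 * N) by field.
  rewrite hh; lra.
have : f y - (1 * a + L / 2 * N * (1 * 1)) - (f x - (0 * a + L / 2 * N * (0 * 0))) <= 0.
  rewrite Hc; nra.
lra.
Qed.
End Descent.


Section Prox.
Variable d : nat.
Variable dom : vec d -> Prop.
Variable h : vec d -> R.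
Implicit Types u v w x y z : vec d.

Definition conv := forall x y t, dom x -> dom y -> 0 <= t <= 1 ->
     dom (vadd (vscale t x) (vscale (1 - t) y)) /\
     h (vadd (vscale t x) (vscale (1 - t) y)) <= t * h x + (1 - t) * h y.

Definition isprox (g : R) (p : vec d -> vec d) := forall z, dom (p z) /\
  forall y, dom y -> h (p z) + / (2 * g) * nsq (vsub (p z) z) <= h y + / (2 * g) * nsq (vsub y z).

Lemma isprox_of g p : is_prox dom h g p -> isprox g p.
Proof. move=> H z; case: (H z) => h1 h2; split => // y hy; have := h2 y hy; by rewrite !norm_sq. Qed.

Lemma lim_arg A B C : 0 <= C -> (forall s, 0 < s <= 1 -> A <= B + s * C) -> A <= B.
Proof.
move=> hC H; case: (Rle_lt_dec A B) => // hAB.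
set s := (A - B) / ((A - B) + C + 1).
have hs1 : 0 < s by apply: Rdiv_lt_0_compat; lra.
have hs2 : s * ((A - B) + C + 1) = A - B by rewrite /s; field; lra.
have := H s; nra.
Qed.

Lemma VI_pt c P z : conv -> 0 < c -> dom P ->
  (forall y, dom y -> h P + c * nsq (vsub P z) <= h y + c * nsq (vsub y z)) ->
  forall y, dom y -> h P <= h y + 2 * c * inner (vsub P z) (vsub y P).
Proof.
move=> Hc hc hP Hm y hy.
apply: (lim_arg (C := c * nsq (vsub y P))); first by have := nsq_ge0 (vsub y P); nra.
move=> s hs.
have [hys hhys] := Hc y P s hy hP ltac:(lra).
have := Hm _ hys.
have -> : vsub (vadd (vscale s y) (vscale (1 - s) P)) z = vadd (vsub P z) (vscale s (vsub y P)) by vext.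
rewrite nsq_add nsq_scale inner_scaler => H1.
have H2 : s * h P <= s * (h y + 2 * c * inner (vsub P z) (vsub y P) + s * (c * nsq (vsub y P))) by nra.
apply: (Rmult_le_reg_l s) => //; lra.
Qed.

Lemma VI g p z : conv -> 0 < g -> isprox g p -> forall y, dom y ->
  h (p z) <= h y + / g * inner (vsub (p z) z) (vsub y (p z)).
Proof.
move=> Hc hg Hp y hy; case: (Hp z) => hd Hm.
have := VI_pt (c := / (2 * g)) Hc ltac:(apply: Rinv_0_lt_compat; lra) hd Hm hy.
have -> : 2 * / (2 * g) = / g by field; lra.
done.
Qed.

Lemma nonexp g p z1 z2 : conv -> 0 < g -> isprox g p ->
  nsq (vsub (p z1) (p z2)) <= nsq (vsub z1 z2).
Proof.
move=> Hc hg Hp.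
have h1 := VI z1 Hc hg Hp (proj1 (Hp z2)).
have h2 := VI z2 Hc hg Hp (proj1 (Hp z1)).
set P1 := p z1 in h1 h2 *; set P2 := p z2 in h1 h2 *.
have e : inner (vsub P1 z1) (vsub P2 P1) + inner (vsub P2 z2) (vsub P1 P2) =
   - nsq (vsub P1 P2) + inner (vsub z1 z2) (vsub P1 P2).
  rewrite /nsq /inner -!sumD -sum_opp -sumD; apply: eq_bigr => i _; rewrite /vsub; ring.
have hig : 0 < / g by apply: Rinv_0_lt_compat.
have : 0 <= inner (vsub P1 z1) (vsub P2 P1) + inner (vsub P2 z2) (vsub P1 P2).
  apply: (Rmult_le_reg_l (/ g)) => //; lra.
rewrite e => h3.
have := young (vsub z1 z2) (vsub P1 P2) Rlt_0_1.
have -> : / (2 * 1) = / 2 by field.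
lra.
Qed.

End Prox.


Lemma sq_abs a b : a ^ 2 <= b ^ 2 -> 0 <= b -> Rabs a <= b.
Proof. move=> h hb; apply: Rabs_le; split; nra. Qed.

Lemma geom_zero a C q : 0 <= q < 1 -> (forall k, a <= C * q ^ k) -> a <= 0.
Proof.
move=> hq H; case: (Rle_lt_dec a 0) => // ha.
have hC : 0 < C by have := H 0%N; rewrite /=; lra.
have [N HN] := pow_lt_1_zero q ltac:(rewrite Rabs_pos_eq; lra) (a / C)
  ltac:(apply: Rdiv_lt_0_compat; lra).
have := HN N (le_n _). rewrite Rabs_pos_eq; last by apply: pow_le; lra.
have := H N => h1 h2.
have : C * q ^ N < C * (a / C) by apply: Rmult_lt_compat_l.
have -> : C * (a / C) = a by field; lra.
lra.
Qed.

Section Fix.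
Variable d : nat.
Implicit Types u v w x y z : vec d.

Lemma fixpoint (G : vec d -> vec d) q : 0 <= q < 1 ->
  (forall a b, nsq (vsub (G a) (G b)) <= q ^ 2 * nsq (vsub a b)) ->
  exists l, G l = l.
Proof.
move=> hq HG.
pose Y k := iter k G (fun _ => 0).
have YS : forall k, Y k.+1 = G (Y k) by [].
set D := nsq (vsub (Y 1%N) (Y 0%N)).
set E := sqrt D.
have hD : 0 <= D by apply: nsq_ge0.
have hE : 0 <= E by apply: sqrt_pos.
have H1 : forall k, nsq (vsub (Y k.+1) (Y k)) <= (q ^ 2) ^ k * D.
  elim=> [|k IH]; first by rewrite /= Rmult_1_l; apply: Rle_refl.
  rewrite !YS. apply: (Rle_trans _ _ _ (HG _ _)). rewrite -YS.
  have hq2 : 0 <= q ^ 2 by apply: pow2_ge_0.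
  rewrite [(q ^ 2) ^ k.+1]/= Rmult_assoc. by apply: Rmult_le_compat_l.
have H2 : forall k i, Rabs (Y k.+1 i - Y k i) <= q ^ k * E.
  move=> k i; apply: sq_abs; last by apply: Rmult_le_pos => //; apply: pow_le; lra.
  apply: (Rle_trans _ _ _ (coord_le (vsub (Y k.+1) (Y k)) i)).
  apply: (Rle_trans _ _ _ (H1 k)).
  rewrite Rpow_mult_distr /E pow2_sqrt // -!pow_mult Nat.mul_comm; lra.
have hq1 : 0 < 1 - q by lra.
have H3 : forall k j i, Rabs (Y (k + j)%N i - Y k i) <= E * q ^ k * (1 - q ^ j) / (1 - q).
  move=> k; elim=> [|j IH] i.
    rewrite addn0 Rminus_diag Rabs_R0 /= Rminus_diag /Rdiv !Rmult_0_r Rmult_0_l; lra.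
  rewrite addnS.
  have := Rabs_triang (Y (k + j).+1 i - Y (k + j)%N i) (Y (k + j)%N i - Y k i).
  have -> : Y (k + j).+1 i - Y (k + j)%N i + (Y (k + j)%N i - Y k i) = Y (k + j).+1 i - Y k i by ring.
  move=> ht. have := H2 (k + j)%N i. have := IH i. rewrite pow_add.
  have -> : E * q ^ k * (1 - q ^ j.+1) / (1 - q) =
     E * q ^ k * (1 - q ^ j) / (1 - q) + q ^ k * q ^ j * E.
    rewrite /=; field; lra.
  lra.
set B := fun k => E * q ^ k / (1 - q).
have hB : forall k, 0 <= B k.
  move=> k; rewrite /B; apply: Rmult_le_pos; last by apply/Rlt_le/Rinv_0_lt_compat.
  apply: Rmult_le_pos => //; apply: pow_le; lra.
have H4 : forall k m i, (k <= m)%N -> Rabs (Y m i - Y k i) <= B k.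
  move=> k m i hkm; rewrite -(subnKC hkm).
  apply: (Rle_trans _ _ _ (H3 _ _ _)). rewrite /B.
  have : 0 <= q ^ (m - k) by apply: pow_le; lra.
  have : 0 <= E * q ^ k by apply: Rmult_le_pos => //; apply: pow_le; lra.
  move=> h1 h2. rewrite /Rdiv. apply: Rmult_le_compat_r; first by apply/Rlt_le/Rinv_0_lt_compat.
  nra.
have Bto0 : forall eps, 0 < eps -> exists N, forall k, (N <= k)%N -> B k < eps.
  move=> eps heps.
  have [N HN] := pow_lt_1_zero q ltac:(rewrite Rabs_pos_eq; lra) (eps * (1 - q) / (E + 1))
    ltac:(apply: Rdiv_lt_0_compat; nra).
  exists N => k hk. have := HN k ltac:(apply/leP: hk). rewrite Rabs_pos_eq; last by apply: pow_le; lra.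
  move=> h. rewrite /B.
  have : E * q ^ k <= (E + 1) * q ^ k by have := pow_le q k ltac:(lra); nra.
  have : (E + 1) * q ^ k < eps * (1 - q).
    have -> : eps * (1 - q) = (E + 1) * (eps * (1 - q) / (E + 1)) by field; lra.
    apply: Rmult_lt_compat_l => //; lra.
  move=> h1 h2. apply/(Rmult_lt_reg_r (1 - q)) => //. rewrite /Rdiv Rmult_assoc Rinv_l; lra.
have Hcau : forall i, Cauchy_crit (fun k => Y k i).
  move=> i eps heps. have [N HN] := Bto0 (eps / 2) ltac:(lra).
  exists N => n m hn hm. rewrite /Rdist.
  move/leP: hn => hn; move/leP: hm => hm.
  have := H4 N n i hn; have := H4 N m i hm; have := HN N (leqnn _).
  have := Rabs_triang (Y n i - Y N i) (Y N i - Y m i).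
  rewrite (Rabs_minus_sym (Y N i)).
  have -> : Y n i - Y N i + (Y N i - Y m i) = Y n i - Y m i by ring.
  lra.
pose l := fun i => proj1_sig (R_complete _ (Hcau i)).
have H5 : forall k i, Rabs (Y k i - l i) <= B k.
  move=> k i. have Hl := proj2_sig (R_complete _ (Hcau i)). rewrite -/(l i) in Hl.
  case: (Rle_lt_dec (Rabs (Y k i - l i)) (B k)) => // hlt.
  have [N HN] := Hl _ (Rgt_minus _ _ hlt).
  have := HN (maxn N k) ltac:(apply/leP; exact: leq_maxl).
  have := H4 k (maxn N k) i (leq_maxr _ _).
  rewrite /Rdist => h1 h2.
  have := Rabs_triang (Y k i - Y (maxn N k) i) (Y (maxn N k) i - l i).
  have -> : Y k i - Y (maxn N k) i + (Y (maxn N k) i - l i) = Y k i - l i by ring.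
  rewrite Rabs_minus_sym in h1. lra.
have H6 : forall k, nsq (vsub (Y k) l) <= INR d * (B k) ^ 2.
  move=> k. rewrite /nsq /inner.
  apply: (Rle_trans _ (\big[Rplus/0]_(i < d) (B k) ^ 2)).
    apply: sum_le => i _. rewrite /vsub. have := H5 k i. have := hB k.
    move=> h1 h2. have : - B k <= Y k i - l i <= B k by split; [have := Rabs_Ropp (Y k i - l i); have := Rle_abs (- (Y k i - l i)) | have := Rle_abs (Y k i - l i)]; lra. nra.
  by rewrite sum_card card_ord; lra.
have H7 : forall k, nsq (vsub (G l) l) <= 4 * INR d * (E / (1 - q)) ^ 2 * q ^ k.
  move=> k.
  have -> : vsub (G l) l = vadd (vsub (G l) (G (Y k))) (vsub (Y k.+1) l) by rewrite YS; vext.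
  apply: (Rle_trans _ _ _ (nsq_sub_le _ _)).
  have e1 : nsq (vsub (G l) (G (Y k))) <= q ^ 2 * nsq (vsub (Y k) l).
    apply: (Rle_trans _ _ _ (HG _ _)).
    have -> : vsub l (Y k) = vscale (-1) (vsub (Y k) l) by vext.
    rewrite nsq_scale; lra.
  have := H6 k; have := H6 k.+1.
  have hd := pos_INR d.
  have eB : forall j, B j = E / (1 - q) * q ^ j by move=> j; rewrite /B; field; lra.
  rewrite !eB. move=> h1 h2.
  set F := E / (1 - q) in h1 h2 *.
  have hqk : 0 <= q ^ k <= 1.
    split; first by apply: pow_le; lra.
    rewrite -(pow1 k); apply: pow_incr; lra.
  have hq2 : 0 <= q ^ 2 <= 1 by split; nra.
  have hF : 0 <= F by apply: Rmult_le_pos => //; apply/Rlt_le/Rinv_0_lt_compat.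
  have eqk : q ^ k.+1 = q * q ^ k by []. rewrite eqk in h1.
  have hN := nsq_ge0 (vsub (Y k) l).
  have hN2 := nsq_ge0 (vsub (Y k.+1) l).
  have a1 : q ^ 2 * nsq (vsub (Y k) l) <= INR d * (F * q ^ k) ^ 2.
    apply: (Rle_trans _ (1 * nsq (vsub (Y k) l))); first by apply: Rmult_le_compat_r; lra.
    lra.
  have a2 : (F * (q * q ^ k)) ^ 2 <= (F * q ^ k) ^ 2.
    apply: pow_incr; split; first by apply: Rmult_le_pos => //; nra.
    apply: Rmult_le_compat_l => //; nra.
  have a3 : (F * q ^ k) ^ 2 <= F ^ 2 * q ^ k.
    rewrite Rpow_mult_distr. apply: Rmult_le_compat_l; first by apply: pow2_ge_0.
    rewrite /= Rmult_1_r; nra.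
  have a4 : INR d * (F * (q * q ^ k)) ^ 2 <= INR d * (F * q ^ k) ^ 2 by apply: Rmult_le_compat_l.
  have a5 : INR d * (F * q ^ k) ^ 2 <= INR d * (F ^ 2 * q ^ k) by apply: Rmult_le_compat_l.
  have -> : 4 * INR d * F ^ 2 * q ^ k = 4 * (INR d * (F ^ 2 * q ^ k)) by ring.
  lra.
exists l.
have h0 : nsq (vsub (G l) l) <= 0 by apply: geom_zero hq H7.
have := nsq0 (Rle_antisym _ _ h0 (nsq_ge0 _)) => e.
apply: functional_extensionality => i.
have : vsub (G l) l i = 0 by rewrite e.
rewrite /vsub; lra.
Qed.

End Fix.


Section ProxExt.
Variable d : nat.
Variable dom : vec d -> Prop.
Variable h : vec d -> R.
Implicit Types u v w x y z : vec d.
Hypothesis Hc : conv dom h.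

Lemma prox_ext eta gam p : 0 < eta -> isprox dom h eta p -> eta / 2 < gam ->
  exists p', isprox dom h gam p'.
Proof.
move=> he Hp hg.
set r := eta / gam.
have hgam : 0 < gam by lra.
have hr : 0 < r < 2.
  split; first by apply: Rdiv_lt_0_compat.
  apply (Rmult_lt_reg_r gam) => //; rewrite /r /Rdiv Rmult_assoc Rinv_l; lra.
have H : forall z, exists y, dom y /\ forall w, dom w ->
    h y + / (2 * gam) * nsq (vsub y z) <= h w + / (2 * gam) * nsq (vsub w z).
  move=> z.
  pose G := fun y => p (vadd (vscale r z) (vscale (1 - r) y)).
  have [y Hy] : exists y, G y = y.
    apply: (@fixpoint d G (Rabs (1 - r))).
      split; [exact: Rabs_pos | apply: Rabs_def1; lra].
    move=> a b; apply: (Rle_trans _ _ _ (nonexp _ _ Hc he Hp)).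
    have -> : vsub (vadd (vscale r z) (vscale (1 - r) a)) (vadd (vscale r z) (vscale (1 - r) b))
      = vscale (1 - r) (vsub a b) by vext.
    rewrite nsq_scale -pow2_abs; lra.
  exists y; split; first by rewrite -Hy; exact: (proj1 (Hp _)).
  move=> w hw.
  have := VI (vadd (vscale r z) (vscale (1 - r) y)) Hc he Hp hw.
  rewrite -/(G y) Hy.
  have -> : vsub y (vadd (vscale r z) (vscale (1 - r) y)) = vscale r (vsub y z) by vext.
  rewrite inner_scalel => h1.
  have -> : vsub w z = vadd (vsub w y) (vsub y z) by vext.
  rewrite nsq_add.
  have e : / eta * (r * inner (vsub y z) (vsub w y)) = / gam * inner (vsub w y) (vsub y z).
    rewrite inner_sym /r; field; lra.
  have hn := nsq_ge0 (vsub w y).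
  have hi : 0 < / (2 * gam) by apply: Rinv_0_lt_compat; lra.
  have e2 : / (2 * gam) * (2 * inner (vsub w y) (vsub y z)) = / gam * inner (vsub w y) (vsub y z).
    field; lra.
  nra.
exists (fun z => proj1_sig (constructive_indefinite_description _ (H z))).
move=> z; exact: (proj2_sig (constructive_indefinite_description _ (H z))).
Qed.

Lemma prox_all eta p : 0 < eta -> isprox dom h eta p ->
  forall gam, 0 < gam -> exists p', isprox dom h gam p'.
Proof.
move=> he Hp.
have Hk : forall k, exists p', isprox dom h (eta * (3 / 4) ^ k) p'.
  elim=> [|k [p' IH]]; first by exists p; rewrite /= Rmult_1_r.
  have hpos : 0 < eta * (3 / 4) ^ k by apply: Rmult_lt_0_compat => //; apply: pow_lt; lra.
  apply: (prox_ext hpos IH). rewrite /=. nra.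
move=> gam hg.
have [N HN] := pow_lt_1_zero (3 / 4) ltac:(rewrite Rabs_pos_eq; lra) (2 * gam / eta)
   ltac:(apply: Rdiv_lt_0_compat; lra).
have := HN N (le_n _). rewrite Rabs_pos_eq; last by apply: pow_le; lra.
move=> h1.
have [p' Hp'] := Hk N.
have hpos : 0 < eta * (3 / 4) ^ N by apply: Rmult_lt_0_compat => //; apply: pow_lt; lra.
apply: (prox_ext hpos Hp').
have : eta * (3 / 4) ^ N < eta * (2 * gam / eta) by apply: Rmult_lt_compat_l.
have -> : eta * (2 * gam / eta) = 2 * gam by field; lra.
lra.
Qed.

Definition Qf (gv x : vec d) (al : R) (y : vec d) :=
  inner gv (vsub y x) + al / 2 * nsq (vsub y x) + h y - h x.

Lemma prox_Q gam p gv x : 0 < gam -> isprox dom h gam p ->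
  let xb := p (vsub x (vscale gam gv)) in
  dom xb /\ forall w, dom w -> Qf gv x (/ gam) xb <= Qf gv x (/ gam) w.
Proof.
move=> hg Hp xb; case: (Hp (vsub x (vscale gam gv))) => hd Hm.
split => // w hw.
have := Hm w hw. rewrite -/xb.
have E : forall y, nsq (vsub y (vsub x (vscale gam gv))) =
   nsq (vsub y x) + 2 * gam * inner gv (vsub y x) + gam ^ 2 * nsq gv.
  move=> y; have -> : vsub y (vsub x (vscale gam gv)) = vadd (vsub y x) (vscale gam gv) by vext.
  rewrite nsq_add nsq_scale inner_scaler inner_sym; ring.
rewrite !E /Qf => h1.
have e : forall A B, / (2 * gam) * (A + 2 * gam * B + gam ^ 2 * nsq gv) =
   / gam / 2 * A + B + gam / 2 * nsq gv.
  move=> A B; field; lra.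
rewrite !e in h1. lra.
Qed.

Lemma minimizer mu gv x eta p : 0 < eta -> isprox dom h eta p -> 0 < mu ->
  exists y, dom y /\ forall w, dom w -> Qf gv x mu y <= Qf gv x mu w.
Proof.
move=> he Hp hm.
have [p' Hp'] := prox_all he Hp (Rinv_0_lt_compat _ hm).
have := prox_Q gv x (Rinv_0_lt_compat _ hm) Hp'.
rewrite Rinv_inv => -[h1 h2]; by eexists; split; [exact: h1 | exact: h2].
Qed.

End ProxExt.


Section Det.
Variables (n d : nat) (L mu eta : R) (fs : 'I_n -> vec d -> R) (gs : 'I_n -> vec d -> vec d)
  (dom : vec d -> Prop) (h : vec d -> R) (xstar : vec d) (prox : vec d -> vec d).
Hypothesis hn : (1 <= n)%N.
Hypothesis hL : 0 < L.
Hypothesis Hgrad : forall i, is_gradient (fs i) (gs i).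
Hypothesis Hlip : forall i, lipschitz_grad L (gs i).
Hypothesis Hc : conv dom h.
Hypothesis Hxs : dom xstar.
Hypothesis Hopt : forall y, dom y -> favg fs xstar + h xstar <= favg fs y + h y.
Hypothesis hmu : 0 < mu.
Hypothesis HPL : is_PL fs gs dom h (favg fs xstar + h xstar) mu.
Hypothesis heta : 0 < eta.
Hypothesis hetaL : eta * L < 1.
Hypothesis Hprox : isprox dom h eta prox.

Definition Del x := favg fs x + h x - (favg fs xstar + h xstar).

Lemma Del_ge0 x : dom x -> 0 <= Del x.
Proof. move=> hx; have := Hopt hx; rewrite /Del; lra. Qed.

Lemma INRn_pos : 0 < INR n.
Proof. apply: lt_0_INR; apply/ltP; done. Qed.

Lemma fdesc x y : favg fs y <= favg fs x + inner (gavg gs x) (vsub y x) + L / 2 * nsq (vsub y x).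
Proof.
have hN := INRn_pos.
have H : \big[Rplus/0]_(i < n) fs i y <=
   \big[Rplus/0]_(i < n) (fs i x + inner (gs i x) (vsub y x) + L / 2 * nsq (vsub y x)).
  by apply: sum_le => i _; apply: descent.
rewrite !sumD sum_card card_ord in H.
have e : inner (gavg gs x) (vsub y x) = / INR n * \big[Rplus/0]_(i < n) inner (gs i x) (vsub y x).
  rewrite {1}/inner /gavg.
  rewrite (eq_bigr (fun k => \big[Rplus/0]_(i < n) (/ INR n * (gs i x k * vsub y x k)))); last first.
    by move=> k _; rewrite sumZ big_distrl /=; apply: eq_bigr => i _; ring.
  rewrite exchange_big sumZ; apply: eq_bigr => i _; by rewrite /inner sumZ.
rewrite /favg e.
have hi : 0 < / INR n by apply: Rinv_0_lt_compat.
have -> : L / 2 * nsq (vsub y x) = / INR n * (INR n * (L / 2 * nsq (vsub y x))) by field; lra.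
have H2 := Rmult_le_compat_l _ _ _ (Rlt_le _ _ hi) H. rewrite !Rmult_plus_distr_l in H2. exact: H2.
Qed.

Lemma Qf0 gv x : Qf h gv x eta x = 0 \/ True.
Proof. by right. Qed.

Lemma key_m x : dom x ->
  let gx := gavg gs x in
  let xb := prox (vsub x (vscale eta gx)) in
  Qf h gx x (/ eta) xb <= - (mu * eta) * Del x.
Proof.
move=> hx gx xb.
have [hxb Hxb] := prox_Q gx x heta Hprox.
rewrite -/xb in hxb Hxb.
have [y [hy Hy]] := minimizer Hc gx x heta Hprox hmu.
have hD : is_Dh gs dom h x mu (-2 * mu * Qf h gx x mu y).
  exists (Qf h gx x mu y); split => //; split.
    by exists y; split => //; rewrite /Qf norm_sq.
  by move=> w hw; rewrite norm_sq; apply: Hy.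
have := HPL hx hD. rewrite -/(Del x) => hpl.
have hm : Qf h gx x mu y <= - Del x by nra.
have hDx := Del_ge0 hx.
case: (Rle_lt_dec (mu * eta) 1) => hs.
- set s := mu * eta in hs *.
  have hs0 : 0 < s by apply: Rmult_lt_0_compat.
  have [hys hhys] : dom (vadd (vscale s y) (vscale (1 - s) x)) /\ h (vadd (vscale s y) (vscale (1 - s) x)) <= s * h y + (1 - s) * h x by apply: Hc => //; lra.
  apply: (Rle_trans _ _ _ (Hxb _ hys)).
  rewrite /Qf. have -> : vsub (vadd (vscale s y) (vscale (1 - s) x)) x = vscale s (vsub y x) by vext.
  rewrite nsq_scale inner_scaler.
  rewrite /Qf in hm.
  have e : / eta / 2 * (s ^ 2 * nsq (vsub y x)) = s * (mu / 2 * nsq (vsub y x)).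
    rewrite /s; field; lra.
  rewrite e. nra.
- (* mu * eta > 1: Del x = 0 *)
  have hmuL : L < mu.
    have : 1 < mu * eta by lra.
    nra.
  have h1 := fdesc x y.
  have h2 := Hopt hy.
  rewrite /Qf in hm. rewrite /Del in hm hDx.
  have hN := nsq_ge0 (vsub y x).
  rewrite -/gx in h1. have hmN : (mu - L) * nsq (vsub y x) <= 0 by lra.
  have hN0 : nsq (vsub y x) = 0 by nra.
  have eyx : y = x.
    have := nsq0 hN0 => e; apply: functional_extensionality => k.
    have : vsub y x k = 0 by rewrite e. rewrite /vsub; lra.
  rewrite eyx in hm.
  have : inner gx (vsub x x) = 0.
    have -> : vsub x x = vscale 0 x by vext.
    by rewrite inner_scaler Rmult_0_l.
  have : nsq (vsub x x) = 0.
    have -> : vsub x x = vscale 0 x by vext.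
    by rewrite nsq_scale; ring.
  move=> e1 e2. rewrite e1 e2 in hm.
  have hD0 : Del x = 0 by rewrite /Del; lra.
  rewrite hD0 Rmult_0_r.
  apply: (Rle_trans _ _ _ (Hxb _ hx)). rewrite /Qf e1 e2; lra.
Qed.

Lemma det_step x v : dom x ->
  let x' := prox (vsub x (vscale eta v)) in
  Del x' <= (1 - mu * eta) * Del x + eta / 2 * nsq (vsub (gavg gs x) v)
            - (/ (2 * eta) - L / 2) * nsq (vsub x' x).
Proof.
move=> hx x'.
set gx := gavg gs x.
set xb := prox (vsub x (vscale eta gx)).
have hk := key_m hx. rewrite -/gx -/xb in hk.
have hxb : dom xb by exact: (proj1 (Hprox _)).
have hvi := VI (vsub x (vscale eta v)) Hc heta Hprox hxb.
rewrite -/x' in hvi.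
have hf := fdesc x x'.
have hy := young (vsub gx v) (vsub x' xb) heta.
have E : inner gx (vsub x' x) - inner gx (vsub xb x)
   + / eta * inner (vsub x' (vsub x (vscale eta v))) (vsub xb x') - / eta / 2 * nsq (vsub xb x)
   = inner (vsub gx v) (vsub x' xb) - / (2 * eta) * nsq (vsub x' x) - / (2 * eta) * nsq (vsub x' xb).
  rewrite /nsq /inner !sumZ -!sumB -!sumD -?sumB -?sumD -?sumB.
  apply: eq_bigr => k _; rewrite /vsub /vscale; field; lra.
rewrite /Qf in hk. rewrite /Del.
rewrite /Del in hk.
rewrite -/xb in hk. rewrite -/gx in hf.
lra.
Qed.

End Det.

Lemma expect_sum (T : finType) (I : Type) (r : seq I) (X : I -> T -> R) :
  expect (fun w => \big[Rplus/0]_(k <- r) X k w) = \big[Rplus/0]_(k <- r) expect (X k).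
Proof.
rewrite /expect exchange_big sumZ; apply: eq_bigr => k _; done.
Qed.

Lemma expect_swap (A B : finType) (X : A -> B -> R) :
  expect (fun a => expect (fun b => X a b)) = expect (fun b => expect (fun a => X a b)).
Proof.
rewrite /expect.
rewrite (eq_bigr (fun a => \big[Rplus/0]_(b : B) (/ INR #|{:B}| * X a b))); last by move=> *; rewrite sumZ.
rewrite [in RHS](eq_bigr (fun b => \big[Rplus/0]_(a : A) (/ INR #|{:A}| * X a b))); last by move=> *; rewrite sumZ.
rewrite exchange_big !sumZ; apply: eq_bigr => b _; rewrite !sumZ; apply: eq_bigr => a _; ring.
Qed.

Lemma expect_ext (T : finType) (X Y : T -> R) : (forall w, X w = Y w) -> expect X = expect Y.
Proof. by move=> H; rewrite /expect; congr (_ * _); apply: eq_bigr => w _. Qed.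

Lemma expect_ord n (X : 'I_n -> R) : expect X = / INR n * \big[Rplus/0]_(i < n) X i.
Proof. by rewrite /expect card_ord. Qed.

Section Var.
Variables (n d : nat) (zeta : 'I_n -> vec d).
Hypothesis hn : (0 < n)%N.
Hypothesis Hz : forall k, \big[Rplus/0]_(i < n) zeta i k = 0.

Definition Ssum m (t : m.-tuple 'I_n) : vec d := fun k => \big[Rplus/0]_(i <- tval t) zeta i k.

Lemma var_tuple m :
  expect (fun t : m.-tuple 'I_n => nsq (Ssum t)) = INR m * (/ INR n * \big[Rplus/0]_(i < n) nsq (zeta i)).
Proof.
have i0 : 'I_n := Ordinal hn.
elim: m => [|m IH].
  rewrite expect_tuple0.
  have -> : Ssum [tuple] = (fun _ => 0) by apply: functional_extensionality => k; rewrite /Ssum big_nil.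
  rewrite nsq_zero /=; ring.
rewrite expect_tuple.
have e : forall x (t : m.-tuple 'I_n), Ssum [tuple of x :: tval t] = vadd (zeta x) (Ssum t).
  by move=> x t; apply: functional_extensionality => k; rewrite /Ssum /vadd big_cons.
under expect_ext => x do under expect_ext => t do rewrite e nsq_add.
under expect_ext => x do rewrite expectD expectD IH (expect_const (nseq_tuple m i0)).
rewrite !expectD (expect_const i0) expect_ord.
have -> : expect (fun x => expect (fun t : m.-tuple 'I_n => 2 * inner (zeta x) (Ssum t))) = 0.
  under expect_ext => x do rewrite expectZ /inner expect_sum.
  under expect_ext => x do under eq_bigr => k _ do rewrite expectZ.
  rewrite expectZ expect_sum.
  rewrite big1; first ring.
  move=> k _.
  have -> : (fun x => zeta x k * expect (fun t : m.-tuple 'I_n => Ssum t k)) =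
    (fun x => expect (fun t : m.-tuple 'I_n => Ssum t k) * zeta x k) by apply: functional_extensionality => x; ring.
  by rewrite expectZ expect_ord Hz; ring.
rewrite S_INR; ring.
Qed.

End Var.

Lemma prob_notin n (j : 'I_n) b :
  expect (fun t : b.-tuple 'I_n => if j \in tval t then 0 else 1) = (1 - / INR n) ^ b.
Proof.
elim: b => [|b IH]; first by rewrite expect_tuple0.
rewrite expect_tuple.
have e : forall x (t : b.-tuple 'I_n), (if j \in tval [tuple of x :: tval t] then 0 else 1) =
      (if j == x then 0 else 1) * (if j \in tval t then 0 else 1).
  by move=> x t; rewrite /= in_cons; case: (j == x); case: (j \in tval t) => /=; ring.
under expect_ext => x do under expect_ext => t do rewrite e.
under expect_ext => x do rewrite expectZ IH.
have -> : (fun x : 'I_n => (if j == x then 0 else 1) * (1 - / INR n) ^ b) =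
   (fun x => (1 - / INR n) ^ b * (if j == x then 0 else 1)) by apply: functional_extensionality => x; ring.
rewrite expectZ expect_ord.
have hn : (0 < n)%N := leq_ltn_trans (leq0n j) (ltn_ord j).
have hN : 0 < INR n by apply: lt_0_INR; apply/ltP.
rewrite (bigD1 j) //= eqxx.
rewrite (eq_bigr (fun _ => 1)); last by move=> i /negbTE; rewrite eq_sym => ->.
have : \big[Rplus/0]_(i < n | i != j) 1 = INR n - 1.
  have := sum_card 'I_n 1. rewrite card_ord (bigD1 j) //= => H. apply: (Rplus_eq_reg_l 1). apply: (eq_trans H). ring.
move=> ->. rewrite /=. field. lra.
Qed.

Unset Implicit Arguments.

Lemma pow_bound x m : 0 <= x <= 1 -> (1 - x) ^ m * (1 + INR m * x) <= 1.
Proof.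
move=> hx; elim: m => [|m IH]; first by rewrite /=; lra.
rewrite S_INR /=.
have h0 : 0 <= (1 - x) ^ m by apply: pow_le; lra.
have : (1 - x) * (1 + (INR m + 1) * x) <= 1 + INR m * x.
  have := pos_INR m; nra.
move=> h1.
apply: (Rle_trans _ ((1 - x) ^ m * (1 + INR m * x))) => //.
have -> : (1 - x) * (1 - x) ^ m * (1 + (INR m + 1) * x) = (1 - x) ^ m * ((1 - x) * (1 + (INR m + 1) * x)) by ring.
by apply: Rmult_le_compat_l.
Qed.

Lemma consts N B rho L eta q :
  1 <= B -> B <= N -> 0 < rho -> rho <= 1 / 5 -> 16 * N ^ 2 * rho ^ 2 / B ^ 3 + rho <= 1 ->
  0 < L -> eta = rho / L -> 0 <= q -> q * (1 + B / N) <= 1 ->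
  let beta := 2 * N / B in let cc := 2 * eta * L ^ 2 * N / B ^ 2 in
  eta / 2 * (L ^ 2 / B) + cc * q * (1 + / beta) <= cc /\
  cc * (1 + q * beta) <= / (2 * eta) - L / 2.
Proof.
move=> hB hBN hr hr5 hc hL he hq hq1 beta cc.
have hN : 0 < N by lra.
have heta : 0 < eta by rewrite he; apply: Rdiv_lt_0_compat.
set s := B / N in hq1 *.
have hs : 0 < s <= 1.
  split; first by apply: Rdiv_lt_0_compat; lra.
  apply (Rmult_le_reg_r N) => //; rewrite /s /Rdiv Rmult_assoc Rinv_l; lra.
have hcc : 0 < cc.
  rewrite /cc; apply: Rdiv_lt_0_compat; last by apply: pow_lt; lra.
  have := pow_lt L 2 hL => hL2. apply: Rmult_lt_0_compat; [apply: Rmult_lt_0_compat => //; apply: Rmult_lt_0_compat => //; lra | lra].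
have hq1' : q <= 1.
  have : 0 <= q * s by apply: Rmult_le_pos; lra.
  lra.
split.
- have eb : / beta = s / 2 by rewrite /beta /s; field; lra.
  rewrite eb.
  have e1 : eta / 2 * (L ^ 2 / B) = cc * s / 4 by rewrite /cc /s; field; lra.
  rewrite e1.
  (* q * (1 + s/2) <= (1+s/2)/(1+s) <= 1 - s/4 *)
  have h2 : q * (1 + s / 2) * (1 + s) <= 1 + s / 2.
    have -> : q * (1 + s / 2) * (1 + s) = (q * (1 + s)) * (1 + s / 2) by ring.
    have : 0 < 1 + s / 2 by lra.
    nra.
  have h3 : q * (1 + s / 2) <= 1 - s / 4.
    have h4 : (1 - s / 4) * (1 + s) >= 1 + s / 2 by nra.
    nra.
  nra.
- have hbeta : 0 < beta by rewrite /beta; apply: Rdiv_lt_0_compat; lra.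
  have hb : q * beta <= beta by nra.
  have h1 : cc * (1 + q * beta) <= cc * (1 + beta) by apply: Rmult_le_compat_l; lra.
  apply: (Rle_trans _ _ _ h1).
  have h2 : 1 + beta <= 3 * N / B.
    rewrite /beta; apply (Rmult_le_reg_r B); first lra.
    have -> : (1 + 2 * N / B) * B = B + 2 * N by field; lra.
    have -> : 3 * N / B * B = 3 * N by field; lra.
    lra.
  apply: (Rle_trans _ (cc * (3 * N / B))); first by apply: Rmult_le_compat_l; lra.
  have e : cc * (3 * N / B) = L * (6 * rho * N ^ 2 / B ^ 3).
    rewrite /cc he; field; lra.
  have e2 : / (2 * eta) - L / 2 = L * (1 / (2 * rho) - 1 / 2).
    rewrite he; field; lra.
  rewrite e e2; apply: Rmult_le_compat_l; first lra.
  have hB3 : 0 < B ^ 3 by apply: pow_lt; lra.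
  have k1 : 6 * rho * N ^ 2 / B ^ 3 = (16 * N ^ 2 * rho ^ 2 / B ^ 3) * (3 / (8 * rho)) by field; lra.
  rewrite k1.
  have k2 : 16 * N ^ 2 * rho ^ 2 / B ^ 3 <= 1 - rho by lra.
  have k3 : 0 < 3 / (8 * rho) by apply: Rdiv_lt_0_compat; lra.
  apply: (Rle_trans _ ((1 - rho) * (3 / (8 * rho)))); first by apply: Rmult_le_compat_r; lra.
  have -> : (1 - rho) * (3 / (8 * rho)) = 3 / (8 * rho) - 3 / 8 by field; lra.
  have -> : 1 / (2 * rho) - 1 / 2 = 4 / (8 * rho) - 1 / 2 by field; lra.
  have : 1 / 8 <= 1 / (8 * rho).
    rewrite /Rdiv !Rmult_1_l; apply: Rinv_le_contravar; lra.
  have -> : 3 / (8 * rho) = 3 * (1 / (8 * rho)) by field; lra.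
  have -> : 4 / (8 * rho) = 4 * (1 / (8 * rho)) by field; lra.
  lra.
Qed.

Set Implicit Arguments.


Lemma sum_centered n (c : 'I_n -> R) : (0 < n)%N ->
  \big[Rplus/0]_(i < n) ((c i - / INR n * \big[Rplus/0]_(j < n) c j) * (c i - / INR n * \big[Rplus/0]_(j < n) c j)) <=
  \big[Rplus/0]_(i < n) (c i * c i).
Proof.
move=> hn; have hN : 0 < INR n by apply: lt_0_INR; apply/ltP.
set m := / INR n * \big[Rplus/0]_(j < n) c j.
have e : \big[Rplus/0]_(i < n) ((c i - m) * (c i - m)) =
   \big[Rplus/0]_(i < n) (c i * c i) - 2 * m * \big[Rplus/0]_(i < n) c i + INR n * m ^ 2.
  have s : INR n * m ^ 2 = \big[Rplus/0]_(i < n) m ^ 2 by rewrite sum_card card_ord.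
  rewrite sumZ s -sumB -sumD; apply: eq_bigr => i _; ring.
have e2 : \big[Rplus/0]_(i < n) c i = INR n * m by rewrite /m; field; lra.
rewrite e e2. have := pow2_ge_0 m. nra.
Qed.

Section Step.
Variables (n d b : nat) (L mu rho : R) (fs : 'I_n -> vec d -> R) (gs : 'I_n -> vec d -> vec d)
  (dom : vec d -> Prop) (h : vec d -> R) (xstar : vec d) (prox : vec d -> vec d).
Hypothesis hn : (1 <= n)%N.
Hypothesis hb1 : (1 <= b)%N.
Hypothesis hbn : (b <= n)%N.
Hypothesis hL : 0 < L.
Hypothesis Hgrad : forall i, is_gradient (fs i) (gs i).
Hypothesis Hlip : forall i, lipschitz_grad L (gs i).
Hypothesis Hc : conv dom h.
Hypothesis Hopt : forall y, dom y -> favg fs xstar + h xstar <= favg fs y + h y.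
Hypothesis hmu : 0 < mu.
Hypothesis HPL : is_PL fs gs dom h (favg fs xstar + h xstar) mu.
Hypothesis hrho : 0 < rho.
Hypothesis hrho5 : rho <= 1 / 5.
Hypothesis hrhoc : 16 * (INR n)^2 * rho^2 / (INR b)^3 + rho <= 1.
Hypothesis Hprox : isprox dom h (rho / L) prox.

Definition eta := rho / L.
Definition Gam x (al : 'I_n -> vec d) := / INR n * \big[Rplus/0]_(j < n) nsq (vsub x (al j)).
Definition cc := 2 * eta * L ^ 2 * INR n / INR b ^ 2.
Definition theta := mu * eta.
Definition Phi x al := Del fs h xstar x + cc * Gam x al.
Definition Psi (st : saga_state n d) := let: (x, al, hist) := st in
  Phi x al + theta * \big[Rplus/0]_(y <- hist) Del fs h xstar y.
Definition vvec x (al : 'I_n -> vec d) (Is : b.-tuple 'I_n) : vec d := fun k =>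
  / INR b * \big[Rplus/0]_(i <- tval Is) (gs i x k - gs i (al i) k) +
  / INR n * \big[Rplus/0]_(i < n) gs i (al i) k.

Lemma step_eq x al hist Is Js :
  saga_step gs eta prox (x, al, hist) (Is, Js) =
  (prox (vsub x (vscale eta (vvec x al Is))), (fun j => if j \in tval Js then x else al j), rcons hist x).
Proof. by []. Qed.

Lemma hN : 0 < INR n. Proof. apply: lt_0_INR; apply/ltP; done. Qed.
Lemma hB : 0 < INR b. Proof. apply: lt_0_INR; apply/ltP; done. Qed.
Lemma heta : 0 < eta. Proof. by apply: Rdiv_lt_0_compat. Qed.

Lemma Gam_ge0 x al : 0 <= Gam x al.
Proof.
apply: Rmult_le_pos; first by apply/Rlt_le/Rinv_0_lt_compat/hN.
by apply: sum_ge0 => j _; apply: nsq_ge0.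
Qed.

Lemma var_bound x al :
  expect (fun Is : b.-tuple 'I_n => nsq (vsub (gavg gs x) (vvec x al Is))) <= L ^ 2 / INR b * Gam x al.
Proof.
have hN := hN; have hB := hB.
pose a i := vsub (gs i x) (gs i (al i)).
pose abar : vec d := fun k => / INR n * \big[Rplus/0]_(i < n) a i k.
pose zeta i := vsub (a i) abar.
have Hz : forall k, \big[Rplus/0]_(i < n) zeta i k = 0.
  move=> k; rewrite /zeta /vsub sumB.
  rewrite [X in _ - X = _](_ : _ = INR n * abar k); last by rewrite sum_card card_ord.
  rewrite /abar /=; field; lra.
have ev : forall Is : b.-tuple 'I_n, vsub (gavg gs x) (vvec x al Is) = vscale (- / INR b) (Ssum zeta Is).
  move=> Is; apply: functional_extensionality => k.
  rewrite /vsub /vscale /Ssum /vvec /gavg /zeta /a /abar /vsub /=.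
  rewrite !sumB sum_const size_tuple.
  field; lra.
under expect_ext => Is do rewrite ev nsq_scale.
rewrite expectZ (var_tuple hn Hz).
have hs : \big[Rplus/0]_(i < n) nsq (zeta i) <= \big[Rplus/0]_(i < n) nsq (a i).
  rewrite /nsq /inner /zeta /vsub.
  rewrite exchange_big /=.
  rewrite [X in _ <= X]exchange_big /=.
  apply: sum_le => k _.
  have := sum_centered (fun i => a i k) hn.
  by rewrite /abar.
have hl : \big[Rplus/0]_(i < n) nsq (a i) <= L ^ 2 * \big[Rplus/0]_(i < n) nsq (vsub x (al i)).
  rewrite sumZ; apply: sum_le => i _.
  have := Hlip i x (al i). rewrite -/(a i) => H.
  have h0 := norm_ge0 (a i).
  have : norm (a i) ^ 2 <= (L * norm (vsub x (al i))) ^ 2 by apply: pow_incr.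
  by rewrite Rpow_mult_distr !norm_sq.
rewrite /Gam.
have e : (- / INR b) ^ 2 * (INR b * (/ INR n * \big[Rplus/0]_(i < n) nsq (zeta i))) =
   / INR b * (/ INR n * \big[Rplus/0]_(i < n) nsq (zeta i)) by field; lra.
rewrite e.
have hiB : 0 < / INR b by apply: Rinv_0_lt_compat.
have hiN : 0 < / INR n by apply: Rinv_0_lt_compat.
have : / INR n * \big[Rplus/0]_(i < n) nsq (zeta i) <= / INR n * (L ^ 2 * \big[Rplus/0]_(i < n) nsq (vsub x (al i))).
  apply: Rmult_le_compat_l; lra.
move=> h1.
have -> : L ^ 2 / INR b * (/ INR n * \big[Rplus/0]_(j < n) nsq (vsub x (al j))) =
  / INR b * (/ INR n * (L ^ 2 * \big[Rplus/0]_(i < n) nsq (vsub x (al i)))) by field; lra.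
apply: Rmult_le_compat_l; lra.
Qed.

Definition qb := (1 - / INR n) ^ b.

Lemma invN : 0 < / INR n <= 1.
Proof.
have : 1 <= INR n by apply: (le_INR 1 n); apply/leP.
move=> h1; split; first by apply: Rinv_0_lt_compat; lra.
rewrite -Rinv_1; apply: Rinv_le_contravar; lra.
Qed.

Lemma qb_bounds : 0 <= qb <= 1.
Proof.
have := invN => -[h1 h2].
split; first by apply: pow_le; lra.
apply: (Rle_trans _ (1 ^ b)); [apply: pow_incr; lra | rewrite pow1; lra].
Qed.

Lemma Js_bound x' x al beta : 0 < beta ->
  expect (fun Js : b.-tuple 'I_n => Gam x' (fun j => if j \in tval Js then x else al j)) <=
  (1 + qb * beta) * nsq (vsub x' x) + qb * (1 + / beta) * Gam x al.
Proof.
move=> hbeta.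
have hN := hN.
have i0 : 'I_n := Ordinal hn.
have [hq0 hq1] := qb_bounds.
rewrite /Gam expectZ expect_sum.
set A := nsq (vsub x' x).
have Ej : forall j, expect (fun Js : b.-tuple 'I_n => nsq (vsub x' (if j \in tval Js then x else al j)))
   = A + (nsq (vsub x' (al j)) - A) * qb.
  move=> j.
  have e : forall Js : b.-tuple 'I_n, nsq (vsub x' (if j \in tval Js then x else al j)) =
     A + (nsq (vsub x' (al j)) - A) * (if j \in tval Js then 0 else 1).
    by move=> Js; case: (j \in tval Js); rewrite /A; ring.
  under expect_ext => Js do rewrite e.
  by rewrite expectD (expect_const (nseq_tuple b i0)) expectZ prob_notin.
under eq_bigr => j _ do rewrite Ej.
have hb : forall j, A + (nsq (vsub x' (al j)) - A) * qb <=
   (1 + qb * beta) * A + qb * (1 + / beta) * nsq (vsub x (al j)).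
  move=> j.
  have := nsq_add_le (vsub x' x) (vsub x (al j)) hbeta.
  have -> : vadd (vsub x' x) (vsub x (al j)) = vsub x' (al j) by vext.
  rewrite -/A => h1. nra.
have hiN : 0 < / INR n by apply: Rinv_0_lt_compat.
apply: (Rle_trans _ (/ INR n * \big[Rplus/0]_(j < n) ((1 + qb * beta) * A + qb * (1 + / beta) * nsq (vsub x (al j))))).
  apply: Rmult_le_compat_l; first lra.
  by apply: sum_le => j _; apply: hb.
rewrite sumD sum_card card_ord.
rewrite [X in _ * (_ + X) <= _](_ : _ = qb * (1 + / beta) * \big[Rplus/0]_(j < n) nsq (vsub x (al j))); last by rewrite sumZ.
right; field; lra.
Qed.

Lemma sum_rcons (T : Type) (F : T -> R) (r : seq T) x :
  \big[Rplus/0]_(y <- rcons r x) F y = \big[Rplus/0]_(y <- r) F y + F x.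
Proof. by rewrite -cats1 big_cat big_seq1. Qed.

Lemma Psi_eq x' al' hist x :
  Psi (x', al', rcons hist x) = Del fs h xstar x' + cc * Gam x' al' +
     theta * (\big[Rplus/0]_(y <- hist) Del fs h xstar y + Del fs h xstar x).
Proof. by rewrite /Psi /Phi sum_rcons. Qed.

Lemma step_psi x al hist : dom x ->
  expect (fun w : step_rand n b => Psi (saga_step gs eta prox (x, al, hist) w)) <= Psi (x, al, hist).
Proof.
move=> hx.
have hN := hN; have hB := hB; have heta := heta.
have i0 : 'I_n := Ordinal hn.
set beta := 2 * INR n / INR b.
have hbeta : 0 < beta by rewrite /beta; apply: Rdiv_lt_0_compat; lra.
have [hq0 hq1] := qb_bounds.
have hBN : INR b <= INR n by apply: le_INR; apply/leP.
have hB1 : 1 <= INR b by apply: (le_INR 1 b); apply/leP.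
have hqb : qb * (1 + INR b / INR n) <= 1.
  have := pow_bound (/ INR n) b ltac:(have := invN; lra).
  by rewrite /qb /Rdiv Rmult_comm.
have [C1 C2] := consts _ _ _ _ _ _ hB1 hBN hrho hrho5 hrhoc hL (erefl eta) hq0 hqb.
rewrite -/beta -/cc in C1 C2.
set S := \big[Rplus/0]_(y <- hist) Del fs h xstar y.
set D := Del fs h xstar x.
set G := Gam x al.
have hG := Gam_ge0 x al.
rewrite expect_pair.
under expect_ext => Is do under expect_ext => Js do rewrite step_eq Psi_eq -/S -/D.
apply: (Rle_trans _ (expect (fun Is => (1 - theta) * D + eta / 2 * nsq (vsub (gavg gs x) (vvec x al Is))
    + cc * (qb * (1 + / beta)) * G + theta * (S + D)))).
  apply: expect_le => Is.
  set x' := prox (vsub x (vscale eta (vvec x al Is))).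
  rewrite expectD expectD (expect_const (nseq_tuple b i0)) expectZ (expect_const (nseq_tuple b i0)).
  have hJ := Js_bound x' x al hbeta. rewrite -/G in hJ.
  have hd := det_step hn hL Hgrad Hlip Hc Hopt hmu HPL heta
     ltac:(rewrite /eta /Rdiv Rmult_assoc Rinv_l; lra) Hprox (vvec x al Is) hx.
  rewrite -/x' -/D in hd.
  have hN' := nsq_ge0 (vsub x' x).
  have hcc : 0 < cc.
    rewrite /cc; apply: Rdiv_lt_0_compat; last by apply: pow_lt; lra.
    have := pow_lt L 2 hL => hL2. apply: Rmult_lt_0_compat; last lra.
    apply: Rmult_lt_0_compat => //; lra.
  have h1 : cc * expect (fun Js : b.-tuple 'I_n => Gam x' (fun j => if j \in tval Js then x else al j))
     <= cc * ((1 + qb * beta) * nsq (vsub x' x) + qb * (1 + / beta) * G) by apply: Rmult_le_compat_l; lra.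
  have h2 : cc * ((1 + qb * beta) * nsq (vsub x' x)) <= (/ (2 * eta) - L / 2) * nsq (vsub x' x).
    rewrite -Rmult_assoc; apply: Rmult_le_compat_r; lra.
  rewrite /theta in hd *.
  apply: (Rle_trans _ (Del fs h xstar x' + cc * ((1 + qb * beta) * nsq (vsub x' x) + qb * (1 + / beta) * G) + mu * eta * (S + D))).
    apply: Rplus_le_compat_r; apply: Rplus_le_compat_l; exact: h1.
  nra.
rewrite !expectD !expectZ !(expect_const (nseq_tuple b i0)).
have hv := var_bound x al. rewrite -/G in hv.
have : eta / 2 * expect (fun Is : b.-tuple 'I_n => nsq (vsub (gavg gs x) (vvec x al Is)))
  <= eta / 2 * (L ^ 2 / INR b * G) by apply: Rmult_le_compat_l; lra.
move=> h3.
rewrite /Psi /Phi -/S -/D -/G.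
have : cc * (qb * (1 + / beta)) * G + eta / 2 * (L ^ 2 / INR b * G) <= cc * G.
  have -> : cc * (qb * (1 + / beta)) * G + eta / 2 * (L ^ 2 / INR b * G) =
     (eta / 2 * (L ^ 2 / INR b) + cc * qb * (1 + / beta)) * G by ring.
  by apply: Rmult_le_compat_r.
move=> h4.
suff H : forall E, eta / 2 * E <= eta / 2 * (L ^ 2 / INR b * G) ->
  (1 - theta) * D + eta / 2 * E + cc * (qb * (1 + / beta)) * G + theta * (S + D) <= D + cc * G + theta * S.
  by apply: H; exact: h3.
move=> E hE. have : 0 <= theta * D by have := Del_ge0 Hopt hx; rewrite -/D /theta => hD0; apply: Rmult_le_pos => //; nra.
lra.
Qed.

End Step.

Section Epoch.
Variables (n d b : nat) (L mu rho : R) (fs : 'I_n -> vec d -> R) (gs : 'I_n -> vec d -> vec d)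
  (dom : vec d -> Prop) (h : vec d -> R) (xstar : vec d) (prox : vec d -> vec d).
Hypothesis hn : (1 <= n)%N.
Hypothesis hb1 : (1 <= b)%N.
Hypothesis hbn : (b <= n)%N.
Hypothesis hL : 0 < L.
Hypothesis Hgrad : forall i, is_gradient (fs i) (gs i).
Hypothesis Hlip : forall i, lipschitz_grad L (gs i).
Hypothesis Hc : conv dom h.
Hypothesis Hopt : forall y, dom y -> favg fs xstar + h xstar <= favg fs y + h y.
Hypothesis hmu : 0 < mu.
Hypothesis HPL : is_PL fs gs dom h (favg fs xstar + h xstar) mu.
Hypothesis hrho : 0 < rho.
Hypothesis hrho5 : rho <= 1 / 5.
Hypothesis hrhoc : 16 * (INR n)^2 * rho^2 / (INR b)^3 + rho <= 1.
Hypothesis Hprox : isprox dom h (rho / L) prox.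

Notation step := (@saga_step n d b gs (eta L rho) prox).
Notation Psi := (@Psi n d b L mu rho fs h xstar).
Notation Del := (Del fs h xstar).

Lemma fold_dom (s : saga_state n d) steps :
  dom s.1.1 -> dom (foldl step s steps).1.1 /\
  (forall x0, dom x0 -> (forall i, dom (nth x0 s.2 i)) -> forall i, dom (nth x0 (foldl step s steps).2 i)).
Proof.
elim: steps s => [|w ws IH] s hs; first by split.
have -> : foldl step s (w :: ws) = foldl step (step s w) ws by [].
case: s hs => [[x al] hist] hx.
case: w => Is Js. rewrite step_eq.
have hx' : dom (prox (vsub x (vscale (eta L rho) (vvec gs x al Is)))) by exact: (proj1 (Hprox _)).
have [IH1 IH2] := IH (prox (vsub x (vscale (eta L rho) (vvec gs x al Is))), (fun j => if j \in tval Js then x else al j), rcons hist x) hx'.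
split => // x0 hx0 Hh; apply: IH2 => // i /=.
rewrite nth_rcons; case: ifP => _; first exact: Hh.
by case: ifP.
Qed.

Lemma fold_size (s : saga_state n d) steps :
  size (foldl step s steps).2 = (size s.2 + size steps)%N.
Proof.
elim: steps s => [|w ws IH] s; first by rewrite addn0.
have -> : foldl step s (w :: ws) = foldl step (step s w) ws by [].
case: s => [[x al] hist]; case: w => Is Js.
by rewrite IH step_eq /= size_rcons addSnnS.
Qed.

Lemma fold_psi T (s : saga_state n d) : dom s.1.1 ->
  expect (fun steps : T.-tuple (step_rand n b) => Psi (foldl step s (tval steps))) <= Psi s.
Proof.
elim: T s => [|T IH] s hs.
  by rewrite expect_tuple0 /=; lra.
rewrite expect_tuple /=.
apply: (Rle_trans _ (expect (fun w : step_rand n b => Psi (step s w)))).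
  apply: expect_le => w; apply: IH.
  case: s hs => [[x al] hist] hx; case: w => Is Js; rewrite step_eq /=.
  exact: (proj1 (Hprox _)).
case: s hs => [[x al] hist] /= hx.
exact: (step_psi hn hb1 hbn hL Hgrad Hlip Hc Hopt hmu HPL hrho hrho5 hrhoc Hprox).
Qed.

Lemma Psi_lb (s : saga_state n d) : dom s.1.1 ->
  theta L mu rho * \big[Rplus/0]_(y <- s.2) Del y <= Psi s.
Proof.
case: s => [[x al] hist] /= hx.
rewrite /Psi /Phi.
have := Del_ge0 Hopt hx.
have : 0 <= cc n b L rho * Gam x al.
  apply: Rmult_le_pos; last exact: Gam_ge0.
  rewrite /cc /eta. have hN : 0 < INR n by apply: lt_0_INR; apply/ltP.
  have hB : 0 < INR b by apply: lt_0_INR; apply/ltP.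
  apply: Rmult_le_pos; last by apply/Rlt_le/Rinv_0_lt_compat/pow_lt.
  have : 0 < rho / L by apply: Rdiv_lt_0_compat.
  have := pow_lt L 2 hL. move=> h1 h2. repeat apply: Rmult_le_pos; try lra. apply/Rlt_le/Rinv_0_lt_compat; lra.
lra.
Qed.

Lemma prox_saga_eq T x0 steps (a : 'I_T) :
  prox_saga gs (eta L rho) prox x0 (steps, a) =
  nth x0 (foldl step (x0, (fun _ => x0), [::]) (tval steps)).2 a.
Proof. by rewrite /prox_saga; case: foldl => [[? ?] ?]. Qed.

Lemma epoch T x0 : dom x0 -> (0 < T)%N ->
  expect (fun w : epoch_rand n b T => Del (prox_saga gs (eta L rho) prox x0 w))
   <= Del x0 / (theta L mu rho * INR T) /\
  forall w : epoch_rand n b T, dom (prox_saga gs (eta L rho) prox x0 w).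
Proof.
move=> hx0 hT.
have hTR : 0 < INR T by apply: lt_0_INR; apply/ltP.
have hth : 0 < theta L mu rho by rewrite /theta /eta; apply: Rmult_lt_0_compat => //; apply: Rdiv_lt_0_compat.
split; last first.
  case=> steps a; rewrite prox_saga_eq.
  have [_ H2] := fold_dom (s := (x0, (fun _ => x0), [::]) : saga_state n d) (tval steps) hx0.
  apply: H2 => // i /=; by rewrite nth_nil.
rewrite expect_pair.
set s0 : saga_state n d := (x0, (fun _ => x0), [::]).
have Hfin : forall steps : T.-tuple (step_rand n b),
   expect (fun a : 'I_T => Del (prox_saga gs (eta L rho) prox x0 (steps, a)))
   <= / (theta L mu rho * INR T) * Psi (foldl step s0 (tval steps)).
  move=> steps.
  under expect_ext => a do rewrite prox_saga_eq -/s0.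
  rewrite expect_ord.
  set hist := (foldl step s0 (tval steps)).2.
  have hsz : size hist = T by rewrite /hist fold_size /= size_tuple.
  have e : \big[Rplus/0]_(a < T) Del (nth x0 hist a) = \big[Rplus/0]_(y <- hist) Del y.
    by rewrite (big_nth x0) hsz big_mkord.
  rewrite e.
  have := Psi_lb (s := foldl step s0 (tval steps)) (proj1 (fold_dom (s := s0) (tval steps) hx0)).
  rewrite -/hist => H.
  rewrite Rinv_mult.
  have hiT : 0 < / INR T by apply: Rinv_0_lt_compat.
  have hith : 0 < / theta L mu rho by apply: Rinv_0_lt_compat.
  have : \big[Rplus/0]_(y <- hist) Del y <= / theta L mu rho * Psi (foldl step s0 (tval steps)).
    apply: (Rmult_le_reg_l (theta L mu rho)) => //.
    rewrite -Rmult_assoc Rinv_r; lra.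
  move=> H2.
  have -> : / theta L mu rho * / INR T * Psi (foldl step s0 (tval steps)) =
    / INR T * (/ theta L mu rho * Psi (foldl step s0 (tval steps))) by ring.
  by apply: Rmult_le_compat_l; lra.
apply: (Rle_trans _ _ _ (expect_le Hfin)).
rewrite expectZ.
have := fold_psi T (s := s0) hx0 => H.
have e0 : Psi s0 = Del x0.
  rewrite /Psi /Phi /Gam /s0 big_nil.
  rewrite big1; first ring.
  move=> j _.
  have -> : vsub x0 x0 = vscale 0 x0 by apply: functional_extensionality => k; rewrite /vsub /vscale; ring.
  rewrite nsq_scale; ring.
rewrite e0 in H.
rewrite /Rdiv Rmult_comm.
apply: Rmult_le_compat_r; last exact: H.
apply/Rlt_le/Rinv_0_lt_compat; nra.
Qed.

Lemma kloop T : (0 < T)%N -> 2 <= theta L mu rho * INR T ->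
  forall K x0, dom x0 ->
  expect (fun w : K.-tuple (epoch_rand n b T) => Del (pl_saga gs (eta L rho) prox x0 w))
   <= Del x0 / 2 ^ K.
Proof.
move=> hT hth.
elim=> [|K IH] x0 hx0.
  by rewrite expect_tuple0 /pl_saga /=; lra.
rewrite expect_tuple.
have [E1 E2] := epoch hx0 hT.
have hD0 := Del_ge0 Hopt hx0.
apply: (Rle_trans _ (expect (fun w : epoch_rand n b T => Del (prox_saga gs (eta L rho) prox x0 w) / 2 ^ K))).
  apply: expect_le => w. exact: (IH _ (E2 w)).
under expect_ext => w do rewrite /Rdiv Rmult_comm.
rewrite expectZ.
have hp : 0 < 2 ^ K by apply: pow_lt; lra.
have hTR : 0 < INR T by apply: lt_0_INR; apply/ltP.
have h1 : Del x0 / (theta L mu rho * INR T) <= Del x0 / 2.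
  apply: Rmult_le_compat_l => //; apply: Rinv_le_contravar; lra.
have -> : Del x0 / 2 ^ K.+1 = / 2 ^ K * (Del x0 / 2) by rewrite /=; field; lra.
apply: Rmult_le_compat_l; first by apply/Rlt_le/Rinv_0_lt_compat.
exact: (Rle_trans _ _ _ E1 h1).
Qed.

End Epoch.

Unset Implicit Arguments.

Lemma ceil_facts r : 0 < r ->
  (0 < Z.to_nat (ceilR r))%N /\ r <= INR (Z.to_nat (ceilR r)).
Proof.
move=> hr.
have [h1 _] := base_Int_part (- r).
have hc : r <= IZR (ceilR r) by rewrite /ceilR opp_IZR; lra.
have hpos : (0 < ceilR r)%Z by apply: lt_0_IZR; lra.
have e : INR (Z.to_nat (ceilR r)) = IZR (ceilR r).
  by rewrite INR_IZR_INZ Znat.Z2Nat.id //; lia.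
rewrite e; split => //.
apply/ltP. apply: INR_lt. rewrite e /=. lra.
Qed.

Theorem theorem9 (n d b K : nat) (L mu rho : R)
  (fs : 'I_n -> vec d -> R) (gs : 'I_n -> vec d -> vec d)
  (dom : vec d -> Prop) (h : vec d -> R)
  (xstar x0 : vec d) (prox : vec d -> vec d) :
  (1 <= n)%N -> (1 <= d)%N -> (1 <= b)%N -> (b <= n)%N -> (1 <= K)%N ->
  0 < L ->
  (forall i, is_gradient (fs i) (gs i)) ->
  (forall i, lipschitz_grad L (gs i)) ->
  proper_lsc_convex_closed_dom dom h ->
  dom xstar -> (forall y, dom y -> favg fs xstar + h xstar <= favg fs y + h y) ->
  0 < mu ->
  is_PL fs gs dom h (favg fs xstar + h xstar) mu ->
  0 < rho -> rho <= 1 / 5 ->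
  16 * (INR n)^2 * rho^2 / (INR b)^3 + rho <= 1 ->
  is_prox dom h (rho / L) prox ->
  dom x0 ->
  let T := Z.to_nat (ceilR (6 * L / (mu * rho))) in
  expect (fun w : K.-tuple (epoch_rand n b T) =>
            favg fs (pl_saga gs (rho / L) prox x0 w)
              + h (pl_saga gs (rho / L) prox x0 w)
            - (favg fs xstar + h xstar))
    <= (favg fs x0 + h x0 - (favg fs xstar + h xstar)) / 2 ^ K.
Proof.
move=> hn hd hb1 hbn hK hL Hgrad Hlip Hcvx Hxs Hopt hmu HPL hrho hrho5 hrhoc Hprox hx0 T.
have Hc : conv dom h := proj1 (proj2 Hcvx).
have Hp := isprox_of Hprox.
have hr : 0 < 6 * L / (mu * rho).
  apply: Rdiv_lt_0_compat; first lra. by apply: Rmult_lt_0_compat.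
have [hT hTr] := ceil_facts _ hr.
rewrite -/T in hT hTr.
have hth : 2 <= theta L mu rho * INR T.
  rewrite /theta /eta.
  have : mu * (rho / L) * (6 * L / (mu * rho)) = 6 by field; lra.
  have : 0 < mu * (rho / L) by apply: Rmult_lt_0_compat => //; apply: Rdiv_lt_0_compat.
  nra.
exact: (kloop hn hb1 hbn hL Hgrad Hlip Hc Hopt hmu HPL hrho hrho5 hrhoc Hp hT hth K hx0).
Qed.

Set Implicit Arguments.
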